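(* Let $n\ge2$ and $\mathbf{F}\in\mathbb{R}^n$ with $F_k>0$ for all $k$ and $F_k\ge F_{k+1}$ for $3\le k\le n-1$. Let $U_i=\frac{i}{3/F_1+\sum_{k=2}^i1/F_k}$ and $V_i=\frac{i-1}{\sum_{k=1}^i1/F_k}$ for $2\le i\le n$; let $u$ be the least index in $\arg\max_{2\le i\le n}U_i$ and $v$ the least index in $\arg\max_{2\le i\le n}V_i$. Assume $V_v>U_u$. Define $\boldsymbol\mu\in\mathbb{R}^n$ by $\mu_2=\frac{V_v}{F_1}-\frac12$, $\mu_k=1-\frac{V_v}{F_k}$ for $3\le k\le v$, and $\mu_k=0$ otherwise. Then: (1) $\mu_k\ge0$ for all $1\le k\le n$; (2) $F_1(\frac12+\mu_2)=F_2\big(\frac12-\mu_2+\sum_{i=3}^v\mu_i\big)=F_k(1-\mu_k)=V_v$ for all $3\le k\le v$; (3) $F_k\le V_v$ for all $v+1\le k\le n$.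
   Context: Note $V_v=\frac{v-1}{\sum_{k=1}^v1/F_k}$. *)

(* Defs.v *)
(* F is 1-indexed: F : nat -> R, only F 1 .. F n matter. *)
From mathcomp Require Import all_boot all_order all_algebra.
Set Implicit Arguments. Unset Strict Implicit. Unset Printing Implicit Defensive.
Import Order.TTheory GRing.Theory Num.Theory.
Local Open Scope ring_scope.

Definition Useq (R : realFieldType) (F : nat -> R) (i : nat) : R :=
  i%:R / (3 / F 1%N + \sum_(2 <= k < i.+1) 1 / F k).

Definition Vseq (R : realFieldType) (F : nat -> R) (i : nat) : R :=
  (i.-1)%:R / (\sum_(1 <= k < i.+1) 1 / F k).

Definition least_argmax (R : realFieldType) (W : nat -> R) (n m : nat) : Prop :=
  [/\ (2 <= m <= n)%N,
      (forall i, (2 <= i <= n)%N -> W i <= W m) &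
      (forall i, (2 <= i < m)%N -> W i < W m)].

Definition mu (R : realFieldType) (F : nat -> R) (v k : nat) : R :=
  if k == 2%N then Vseq F v / F 1%N - 1 / 2
  else if (3 <= k <= v)%N then 1 - Vseq F v / F k
  else 0.

(* Main.v *)
Require Import Defs.
From mathcomp Require Import all_boot all_order all_algebra.
Import Order.TTheory GRing.Theory Num.Theory.
Local Open Scope ring_scope.
From mathcomp Require Import lra ring zify.
Lemma L1 (R : realFieldType) (p S x : R) : 0 < S -> 0 < x ->
  (p+1)/(S+1/x) <= p/S -> x <= p/S.
Proof.
move=> hS hx.
have hSa : 0 < S + 1/x by rewrite addr_gt0 // divr_gt0.
set W := p/S; set V := (p+1)/(S+1/x); set a := 1/x.
have eW : W * S = p by rewrite /W mulfVK // gt_eqF.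
have eV : V * (S + a) = p + 1 by rewrite /V mulfVK // gt_eqF.
have ea : a * x = 1 by rewrite /a mul1r mulVf // gt_eqF.
have ha : 0 < a by rewrite divr_gt0.
move=> h.
have h1 : 1 <= V * a by nra.
have : x <= V by nra.
lra.
Qed.
Lemma L2 (R : realFieldType) (q T x : R) : 0 < T -> 0 < x ->
  q/T < (q+1)/(T+1/x) -> (q+1)/(T+1/x) < x.
Proof.
move=> hT hx.
have hSa : 0 < T + 1/x by rewrite addr_gt0 // divr_gt0.
set W := (q+1)/(T+1/x); set V := q/T; set a := 1/x.
have eV : V * T = q by rewrite /V mulfVK // gt_eqF.
have eW : W * (T + a) = q + 1 by rewrite /W mulfVK // gt_eqF.
have ea : a * x = 1 by rewrite /a mul1r mulVf // gt_eqF.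
have ha : 0 < a by rewrite divr_gt0.
move=> h.
have h1 : W * a < 1 by nra.
nra.
Qed.
Lemma L3 (R : realFieldType) (p S f : R) : 0 < S -> 0 < f ->
  (p+1)/(S+2/f) < p/S -> f/2 < p/S.
Proof.
move=> hS hx.
have hSa : 0 < S + 2/f by rewrite addr_gt0 // divr_gt0.
set W := p/S; set V := (p+1)/(S+2/f); set a := 1/f.
have e2 : 2/f = 2 * a by rewrite /a mulrA mulr1.
rewrite e2 in V hSa *.
have eW : W * S = p by rewrite /W mulfVK // gt_eqF.
have eV : V * (S + 2 * a) = p + 1 by rewrite /V mulfVK // gt_eqF.
have ea : a * f = 1 by rewrite /a mul1r mulVf // gt_eqF.
have ha : 0 < a by rewrite divr_gt0.
move=> h.
have h1 : 1 < 2 * W * a by nra.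
nra.
Qed.

Set Implicit Arguments.
Section Aux.
Variables (R : realFieldType) (n : nat) (F : nat -> R).
Hypothesis hpos : forall k, (1 <= k <= n)%N -> 0 < F k.
Hypothesis hmono : forall k, (3 <= k <= n.-1)%N -> F k.+1 <= F k.

Definition Ssum (i : nat) : R := \sum_(1 <= k < i.+1) 1 / F k.

Lemma Spos i : (1 <= i <= n)%N -> 0 < Ssum i.
Proof.
move=> /andP[h1 h2]; rewrite /Ssum big_ltn ?ltnS //.
have h0 : 0 < 1 / F 1%N by apply: divr_gt0 => //; apply: hpos; rewrite /= (leq_trans h1 h2).
suff : 0 <= \sum_(2 <= k < i.+1) 1 / F k by lra.
rewrite big_nat sumr_ge0 // => k /andP[hk1 hk2].
apply: divr_ge0 => //; apply: ltW; apply: hpos; apply/andP; split.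
  by apply: leq_trans hk1.
by rewrite -ltnS; apply: leq_trans hk2 _; rewrite ltnS.
Qed.

Lemma Srec i : Ssum i.+1 = Ssum i + 1 / F i.+1.
Proof. by rewrite /Ssum big_nat_recr. Qed.

Lemma UE i : (1 <= i)%N -> Useq F i = i%:R / (Ssum i + 2 / F 1%N).
Proof.
move=> hi; rewrite /Useq /Ssum [\sum_(1 <= k < _) _]big_ltn ?ltnS //; do 2 f_equal; ring.
Qed.

Lemma VE i : Vseq F i = i.-1%:R / Ssum i.
Proof. by []. Qed.

Lemma mono a b : (3 <= a)%N -> (b <= n)%N -> (a <= b)%N -> F b <= F a.
Proof.
move=> ha; elim: b => [|b IH] hb hab; first by move: (leq_trans ha hab).
case: (ltngtP a b.+1) hab => // [hlt|->] _; last by [].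
apply: le_trans (IH (ltnW hb) hlt); apply: hmono.
rewrite (leq_trans ha hlt) /=; by case: n hb.
Qed.
End Aux.
Arguments Ssum {R} F i.
Arguments Spos {R n F} hpos i.
Arguments Srec {R} F i.
Arguments UE {R} F i.
Arguments mono {R n F} hmono a b.

Theorem lemma7 (R : realFieldType) (n : nat) (F : nat -> R) (u v : nat)
  (hn : (2 <= n)%N)
  (hpos : forall k, (1 <= k <= n)%N -> 0 < F k)
  (hmono : forall k, (3 <= k <= n.-1)%N -> F k.+1 <= F k)
  (hu : least_argmax (Useq F) n u)
  (hv : least_argmax (Vseq F) n v)
  (hVU : Useq F u < Vseq F v) :
  (forall k, (1 <= k <= n)%N -> 0 <= mu F v k)
  /\ [/\ F 1%N * (1 / 2 + mu F v 2) = Vseq F v,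
         F 2%N * (1 / 2 - mu F v 2 + \sum_(3 <= i < v.+1) mu F v i) = Vseq F v
       & forall k, (3 <= k <= v)%N -> F k * (1 - mu F v k) = Vseq F v]
  /\ (forall k, (v.+1 <= k <= n)%N -> F k <= Vseq F v).
Proof.
case: hv => /andP[hv2 hvn] hvmax hvlt.
case: hu => /andP[hu2 hun] humax hult.
set W := Vseq F v.
have F1 : 0 < F 1%N by apply: hpos; rewrite /= (leq_trans _ hn).
have F2 : 0 < F 2%N by apply: hpos; rewrite /= hn.
have SvP : 0 < Ssum F v by apply: (Spos hpos) => //; rewrite hvn (leq_trans _ hv2).
have eW : W = v.-1%:R / Ssum F v by [].
have mu2 : mu F v 2 = W / F 1%N - 1 / 2 by [].
have muk k : (3 <= k <= v)%N -> mu F v k = 1 - W / F k.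
  by move=> hk; rewrite /mu hk; case: eqP => // ek; move: hk; rewrite ek.
have Fk k : (3 <= k <= v)%N -> 0 < F k.
  by move=> /andP[h1 h2]; apply: hpos; rewrite (leq_trans h2 hvn) (leq_trans _ h1).
split; last split.
-
  move=> k hk.
  case: (boolP (k == 2%N)) => [/eqP -> | k2].
    rewrite mu2 subr_ge0.
    have hUv : Useq F v < W.
      by apply: le_lt_trans hVU; apply: humax; rewrite hv2 hvn.
    rewrite UE // in hUv; last by rewrite (leq_trans _ hv2).
    have : F 1%N / 2 < W.
      rewrite eW; apply: L3 => //; rewrite -eW.
      by rewrite -[v in v%:R]prednK ?(leq_trans _ hv2) // -[v.-1.+1%:R]natr1 in hUv.
    rewrite ler_pdivlMr // => h; lra.
  case: (boolP (3 <= k <= v)%N) => hk3; last by rewrite /mu (negbTE k2) (negbTE hk3).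
  rewrite muk // subr_ge0 ler_pdivrMr ?Fk // mul1r.
  have hv3 : (3 <= v)%N by case/andP: hk3 => h1 h2; apply: leq_trans h2.
  have hWv : W < F v.
    have Fv : 0 < F v by apply: Fk; rewrite hv3 leqnn.
    rewrite eW; move: hvlt Fv hvn; clear -hpos hv3.
    case: v hv3 => [|[|[|w]]] // _ hvlt Fv hvn.
    rewrite Srec /= -[w.+2%:R]natr1.
    apply: L2 => //.
    + apply: (Spos hpos); apply/andP; split => //; exact: ltnW.
    + have := hvlt w.+2 (leqnn _); rewrite /Vseq -/(Ssum F w.+2) -/(Ssum F w.+3) [Ssum F w.+3]Srec /= -[w.+2%:R]natr1.
      by [].
  apply: le_trans (ltW hWv) _; apply: (mono hmono) => //; by case/andP: hk3.
-
  split.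
  + rewrite mu2; field; exact: lt0r_neq0.
  + rewrite (@eq_big_nat _ _ _ 3 v.+1 _ (fun i => 1 - W * (1 / F i))); last first.
      by move=> i hi; rewrite muk ?mulrA ?mulr1 //.
    rewrite sumrB sumr_const_nat -mulr_sumr mu2.
    have hS : Ssum F v = 1 / F 1%N + (1 / F 2%N + \sum_(3 <= i < v.+1) 1 / F i).
      by rewrite /Ssum big_ltn ?ltnS ?(ltnW hv2) // big_ltn ?ltnS.
    have hnv : v.-1 = (v.+1 - 3).+1 by move: hv2; clear; lia.
    have e : W * Ssum F v = v.-1%:R by rewrite eW mulfVK // gt_eqF.
    rewrite hS hnv -natr1 in e.
    set X := \sum_(3 <= i < v.+1) 1 / F i in e *.
    set N := (v.+1 - 3)%:R in e *.
    have e2 : 1 / 2 - (W / F 1%N - 1 / 2) + (N - W * X) = W * (1 / F 2%N).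
      have -> : W / F 1%N = W * (1 / F 1%N) by rewrite mulrA mulr1.
      lra.
    rewrite e2; field; exact: lt0r_neq0.
  + by move=> k hk; rewrite muk //; field; apply: lt0r_neq0; apply: Fk.
-
  move=> k /andP[hk1 hk2].
  have hv1n : (v.+1 <= n)%N by apply: leq_trans hk2.
  apply: le_trans (mono hmono v.+1 k hv2 hk2 hk1) _.
  rewrite eW; apply: L1 => //; first by apply: hpos; rewrite hv1n.
  have := hvmax v.+1; rewrite hv1n andbT (leq_trans hv2) // => /(_ isT).
  rewrite /Vseq -/(Ssum F v.+1) -/(Ssum F v) Srec /= natr1 prednK // (leq_trans _ hv2) // ltnW.
Qed.
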